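(* Let $0<\varepsilon\le1/4$, $\beta>1$, and define $\psi_{\varepsilon,\beta}:[0,1]\to[0,1]$ by $\psi_{\varepsilon,\beta}(x)=x$ for $x\in[0,\varepsilon]$, $\psi_{\varepsilon,\beta}(x)=\varepsilon+(1-2\varepsilon)^{1-\beta}(x-\varepsilon)^\beta$ for $x\in[\varepsilon,1-\varepsilon]$, and $\psi_{\varepsilon,\beta}(x)=x$ for $x\in[1-\varepsilon,1]$. For $n\ge1$ let $$d_n=\int_0^1\int_0^{\psi_{\varepsilon,\beta}(x_1)}\int_0^{\psi_{\varepsilon,\beta}(x_2)}\cdots\int_0^{\psi_{\varepsilon,\beta}(x_{n-1})}dx_n\cdots dx_1 .$$ Then (1) for $n=1,2,\dots$, $$d_n=\frac{(2\varepsilon)^n}{n!}+\frac{(1-2\varepsilon)(2\varepsilon)^{n-1}}{(n-1)!}+\sum_{l=2}^n\frac{(1-2\varepsilon)^l(2\varepsilon)^{n-l}}{(n-l)!\,(1+\beta)(1+\beta+\beta^2)\cdots(1+\beta+\dots+\beta^{l-1})};$$ (2) there is a constant $C(\varepsilon,\beta)$ not depending on $n$ such that $d_n<C(\varepsilon,\beta)\frac{(4\varepsilon)^n}{n!}$ for $n=1,2,\dots$. *)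

(* Defs.v *)
From Stdlib Require Import Reals Factorial.
From Coquelicot Require Import Coquelicot.
Open Scope R_scope.

(* psi_{eps,beta} on [0,1] (outside [0,1] the value is irrelevant). *)
Definition psi (eps beta x : R) : R :=
  if Rle_dec x eps then x
  else if Rle_dec x (1 - eps) then eps + Rpower (1 - 2*eps) (1 - beta) * Rpower (x - eps) beta
  else x.

(* Nested integrals, innermost first:
   G 0 x = 1,  G (k+1) x = int_0^{psi x} G k y dy.
   Then d_n = int_0^1 G (n-1) x dx, i.e.
   d_n = int_0^1 int_0^{psi x_1} ... int_0^{psi x_{n-1}} dx_n ... dx_1. *)
Fixpoint G (eps beta : R) (k : nat) (x : R) : R :=
  match k with
  | O => 1
  | S k' => RInt (fun y => G eps beta k' y) 0 (psi eps beta x)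
  end.

Definition d (eps beta : R) (n : nat) : R := RInt (fun x => G eps beta (n - 1) x) 0 1.

Definition geomsum (beta : R) (j : nat) : R := sum_f_R0 (fun i => beta ^ i) j.

Fixpoint prodgeom (beta : R) (m : nat) : R :=
  match m with
  | O => 1
  | S m' => prodgeom beta m' * geomsum beta m
  end.

(* closed form of part (1); sum_n_m over l = 2..n is empty (= 0) when n < 2 *)
Definition dformula (eps beta : R) (n : nat) : R :=
  (2*eps)^n / INR (Factorial.fact n)
  + (1 - 2*eps) * (2*eps)^(n-1) / INR (Factorial.fact (n-1))
  + sum_n_m (fun l => (1 - 2*eps)^l * (2*eps)^(n-l)
                       / (INR (Factorial.fact (n-l)) * prodgeom beta (l-1))) 2 n.

(* Main.v *)
Require Import Defs.
From Stdlib Require Import Reals Factorial Lra Lia.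
From Coquelicot Require Import Coquelicot.
Open Scope R_scope.

Definition pw (p u : R) : R := if Rle_dec u 0 then 0 else Rpower u p.

Lemma Rpower_small q e h : 0 < q -> 0 < e -> 0 < h -> h < Rpower e (/q) -> Rpower h q < e.
Proof.
  intros Hq He Hh Hlt.
  apply Rlt_le_trans with (Rpower (Rpower e (/q)) q).
  apply Rlt_Rpower_l; auto.
  rewrite Rpower_mult. replace (/q*q) with 1 by (field; lra). rewrite Rpower_1; lra.
Qed.

Lemma locally_pos u : 0 < u -> locally u (fun y => 0 < y).
Proof. intros H. apply (open_gt 0 u H). Qed.
Lemma locally_neg u : u < 0 -> locally u (fun y => y < 0).
Proof. intros H. apply (open_lt 0 u H). Qed.

Lemma Rpower_pos u p : 0 < Rpower u p.
Proof. unfold Rpower; apply exp_pos. Qed.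

Lemma pw_cont q u : 0 < q -> continuous (pw q) u.
Proof.
  intros Hq. destruct (Rtotal_order u 0) as [Hu|[Hu|Hu]].
  - apply continuous_ext_loc with (fun _ => 0).
    generalize (locally_neg u Hu); apply filter_imp. intros y Hy; unfold pw.
    destruct (Rle_dec y 0); lra.
    apply continuous_const.
  - subst u. apply continuity_pt_filterlim.
    intros e He. exists (Rmin 1 (Rpower e (/q))). split.
    apply Rmin_glb_lt; [lra| apply Rpower_pos].
    intros x [_ Hx]. unfold R_dist in *. unfold pw at 2. destruct (Rle_dec 0 0); [|lra].
    simpl. unfold R_dist. unfold pw. destruct (Rle_dec x 0). rewrite Rminus_0_r, Rabs_R0; lra.
    rewrite Rminus_0_r. rewrite Rabs_pos_eq by (left; apply Rpower_pos).
    simpl in Hx. unfold R_dist in Hx. rewrite Rminus_0_r in Hx.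
    apply Rpower_small; try lra. rewrite Rabs_pos_eq in Hx by lra.
    apply Rlt_le_trans with (1 := Hx). apply Rmin_r.
  - apply continuous_ext_loc with (fun y => Rpower y q).
    generalize (locally_pos u Hu); apply filter_imp. intros y Hy; unfold pw.
    destruct (Rle_dec y 0); lra.
    apply continuity_pt_filterlim. apply derivable_continuous_pt.
    exists (q * Rpower u (q-1)). apply derivable_pt_lim_power; auto.
Qed.

Lemma pw_derive p u : 1 < p -> is_derive (pw p) u (p * pw (p-1) u).
Proof.
  intros Hp. destruct (Rtotal_order u 0) as [Hu|[Hu|Hu]].
  - replace (p * pw (p-1) u) with 0.
    2:{ unfold pw; destruct (Rle_dec u 0); lra. }
    apply is_derive_ext_loc with (fun _ => 0).
    generalize (locally_neg u Hu); apply filter_imp. intros y Hy; unfold pw.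
    destruct (Rle_dec y 0); lra.
    apply is_derive_Reals; apply derivable_pt_lim_const.
  - subst u. replace (p * pw (p-1) 0) with 0.
    2:{ unfold pw; destruct (Rle_dec 0 0); lra. }
    apply is_derive_Reals. intros e He.
    assert (Hpos : 0 < Rpower e (/(p-1))) by apply Rpower_pos.
    exists (mkposreal _ Hpos). intros h Hh Hlt. simpl in Hlt.
    unfold pw. rewrite Rplus_0_l. destruct (Rle_dec 0 0); [|lra].
    destruct (Rle_dec h 0).
    + replace ((0-0)/h - 0) with 0 by (field; auto). rewrite Rabs_R0; lra.
    + rewrite Rabs_pos_eq in Hlt by lra.
      replace ((Rpower h p - 0)/h - 0) with (Rpower h (p-1)).
      rewrite Rabs_pos_eq by (left; apply Rpower_pos). apply Rpower_small; lra.
      replace p with ((p-1)+1) at 2 by ring. rewrite Rpower_plus, Rpower_1 by lra. field. lra.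
  - apply is_derive_ext_loc with (fun y => Rpower y p).
    generalize (locally_pos u Hu); apply filter_imp. intros y Hy; unfold pw.
    destruct (Rle_dec y 0); lra.
    unfold pw; destruct (Rle_dec u 0); [lra|].
    apply is_derive_Reals. apply derivable_pt_lim_power; auto.
Qed.

Definition aa e := 1 - 2*e.
Definition pp b l := geomsum b l - 1.
Definition PP b l := prodgeom b (l-1).
Definition qt e b k s l := (aa e)^l * s^(k-l) / (INR (fact (k-l)) * PP b l).
Definition Q e b k s := sum_n (qt e b k s) k.
Definition pv b l u := match l with O => 1 | S _ => pw (pp b l) u end.
Definition Mid e b k y := sum_n (fun l => qt e b k e l * pv b l ((y-e)/aa e)) k.
Definition Kf e b k y := if Rle_dec y e then y^k / INR (fact k)
  else if Rle_dec y (1-e) then Mid e b k y else Q e b k (y - 1 + 2*e).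

Lemma geomS b l : geomsum b (S l) = 1 + b * geomsum b l.
Proof.
  induction l. unfold geomsum; simpl; ring.
  unfold geomsum in *. change (sum_f_R0 (fun i => b^i) (S (S l))) with
    (sum_f_R0 (fun i => b^i) (S l) + b^(S (S l))).
  rewrite IHl at 1. change (sum_f_R0 (fun i => b^i) (S l)) with
    (sum_f_R0 (fun i => b^i) l + b^(S l)). replace (b^(S (S l))) with (b * b^(S l)) by reflexivity. set (t := b^(S l)). ring.
Qed.
Lemma pp0 b : pp b 0 = 0.
Proof. unfold pp, geomsum; simpl; ring. Qed.
Lemma ppS b l : pp b (S l) = b * (pp b l + 1).
Proof. unfold pp; rewrite geomS; ring. Qed.
Lemma pp_ge0 b l : 1 < b -> 0 <= pp b l.
Proof. intros Hb; induction l. rewrite pp0; lra. rewrite ppS; nra. Qed.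
Lemma pp_ge b l : 1 < b -> (1 <= l)%nat -> b <= pp b l.
Proof. intros Hb Hl; destruct l. lia. rewrite ppS. generalize (pp_ge0 b l Hb); nra. Qed.
Lemma PPS b l : PP b (S l) = PP b l * (1 + pp b l).
Proof.
  unfold PP, pp. destruct l; simpl. unfold geomsum; simpl; ring.
  replace (l - 0)%nat with l by lia. ring.
Qed.
Lemma PP_pos b l : 1 < b -> 0 < PP b l.
Proof.
  intros Hb; induction l. unfold PP; simpl; lra.
  rewrite PPS. generalize (pp_ge0 b l Hb); nra.
Qed.

Lemma cont_of_derive (f : R -> R) (x l : R) : is_derive f x l -> continuous f x.
Proof.
  intro H; apply continuity_pt_filterlim; apply derivable_continuous_pt; exists l;
  apply is_derive_Reals; auto.
Qed.

Lemma RInt_deriv (F f : R -> R) a b :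
  (forall x, Rmin a b <= x <= Rmax a b -> is_derive F x (f x)) ->
  (forall x, Rmin a b <= x <= Rmax a b -> continuous f x) ->
  is_RInt f a b (F b - F a).
Proof. intros H1 H2. exact (@is_RInt_derive R_CompleteNormedModule F f a b H1 H2). Qed.

Lemma is_RInt_sum (f : nat -> R -> R) (F : nat -> R) a b n :
 (forall l, (l <= n)%nat -> is_RInt (f l) a b (F l)) ->
 is_RInt (fun y => sum_n (fun l => f l y) n) a b (sum_n F n).
Proof.
  induction n; intros H.
  - apply is_RInt_ext with (f 0%nat). intros; rewrite sum_O; reflexivity.
    rewrite sum_O; apply H; lia.
  - apply is_RInt_ext with (fun y => plus (sum_n (fun l => f l y) n) (f (S n) y)).
    intros; rewrite sum_Sn; reflexivity. rewrite sum_Sn.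
    apply (is_RInt_plus (fun y => sum_n (fun l => f l y) n) (f (S n))).
    apply IHn; intros; apply H; lia. apply H; lia.
Qed.

Lemma int_low k x : is_RInt (fun y => y^k / INR (fact k)) 0 x (x^(S k) / INR (fact (S k))).
Proof.
  assert (Hf : forall m, 0 < INR (fact m)) by (intro; apply lt_0_INR, lt_O_fact).
  replace (x^(S k) / INR (fact (S k))) with
    ((fun y => y^(S k) / INR (fact (S k))) x - (fun y => y^(S k) / INR (fact (S k))) 0).
  2:{ simpl. field. generalize (Hf (S k)); simpl; lra. }
  apply (RInt_deriv (fun y => y^(S k) / INR (fact (S k)))).
  - intros y _. auto_derive. auto.
    change (match k with 0%nat => 1 | S _ => INR k + 1 end) with (INR (S k)).
    replace (INR (fact k + k * fact k)) with (INR (S k) * INR (fact k))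
      by (rewrite <- mult_INR; f_equal; simpl; lia).
    set (t := y^k). field. generalize (Hf k) (pos_INR k); rewrite S_INR. split; lra.
  - intros y _. eapply cont_of_derive. auto_derive. auto. reflexivity.
Qed.

Lemma int_up e b k l c x0 x1 : 1 < b -> (l <= k)%nat ->
  is_RInt (fun y => qt e b k (y - c) l) x0 x1 (qt e b (S k) (x1-c) l - qt e b (S k) (x0-c) l).
Proof.
  intros Hb Hl.
  assert (Hf : forall m, 0 < INR (fact m)) by (intro; apply lt_0_INR, lt_O_fact).
  generalize (PP_pos b l Hb); intro HP.
  unfold qt. replace (S k - l)%nat with (S (k - l)) by lia.
  set (m := (k-l)%nat).
  replace (aa e ^ l * (x1 - c) ^ S m / (INR (fact (S m)) * PP b l) -
    aa e ^ l * (x0 - c) ^ S m / (INR (fact (S m)) * PP b l)) with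
    ((fun y => aa e ^ l * (y - c) ^ S m / (INR (fact (S m)) * PP b l)) x1 -
      (fun y => aa e ^ l * (y - c) ^ S m / (INR (fact (S m)) * PP b l)) x0) by reflexivity.
  apply (RInt_deriv (fun y => aa e ^ l * (y - c) ^ S m / (INR (fact (S m)) * PP b l))).
  - intros y _. auto_derive. auto.
    change (match m with 0%nat => 1 | S _ => INR m + 1 end) with (INR (S m)).
    replace (INR (fact m + m * fact m)) with (INR (S m) * INR (fact m))
      by (rewrite <- mult_INR; f_equal; simpl; lia).
    replace (y + - c) with (y - c) by ring. set (t := (y-c)^m). set (t2 := aa e ^ l). field. generalize (Hf m) (pos_INR m) HP; rewrite S_INR. intros; repeat split; lra.
  - intros y _. eapply cont_of_derive. auto_derive. all: try exact I; try reflexivity.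
Qed.

Lemma int_mid b e C l w : 0 < aa e -> 1 < b -> 0 < w ->
  is_RInt (fun y => C * pv b l ((y-e)/aa e)) e (e + aa e * w)
    (C * aa e / (1 + pp b l) * Rpower w (pp b l + 1)).
Proof.
  intros Ha Hb Hw. set (a := aa e) in *. destruct l as [|m].
  - simpl pv. rewrite pp0. replace (C * a / (1 + 0) * Rpower w (0 + 1)) with
      (scal ((e + a*w) - e) (C * 1)).
    apply (@is_RInt_const R_NormedModule).
    rewrite Rplus_0_l, Rpower_1 by lra. unfold scal; simpl; unfold mult; simpl. field.
  - set (q := pp b (S m)). assert (Hq : b <= q) by (apply pp_ge; auto; lia).
    change (fun y => C * pv b (S m) ((y-e)/a)) with (fun y => C * pw q ((y-e)/a)).
    replace (C * a / (1 + q) * Rpower w (q + 1)) with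
      ((fun y => C * a / (1 + q) * pw (q+1) ((y-e)/a)) (e + a*w) -
       (fun y => C * a / (1 + q) * pw (q+1) ((y-e)/a)) e).
    2:{ simpl. replace ((e + a*w - e)/a) with w by (field; lra).
        replace ((e-e)/a) with 0 by (field; lra). unfold pw.
        destruct (Rle_dec w 0); [lra|]. destruct (Rle_dec 0 0); [|lra]. ring. }
    apply (RInt_deriv (fun y => C * a / (1 + q) * pw (q+1) ((y-e)/a))).
    + intros y _.
      replace (C * pw q ((y-e)/a)) with (C * a / (1+q) * scal (/a) ((q+1) * pw (q+1-1) ((y-e)/a))).
      apply is_derive_scal.
      apply (is_derive_comp (pw (q+1)) (fun y => (y-e)/a)).
      apply pw_derive; lra.
      auto_derive; auto. field; lra.
      unfold scal; simpl; unfold mult; simpl. replace (q+1-1) with q by ring. field; lra.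
    + intros y _.
      apply (continuous_comp (fun y => (y-e)/a) (fun u => C * pw q u)).
      eapply cont_of_derive. auto_derive; try exact I; try reflexivity. try lra.
      apply (continuous_mult (fun _ => C) (pw q)). apply continuous_const.
      apply pw_cont; lra.
Qed.

Lemma sum_shift (f : nat -> R) n : sum_n f (S n) = f O + sum_n (fun l => f (S l)) n.
Proof. rewrite !sum_n_Reals. apply decomp_sum. lia. Qed.

Lemma Rpower_1_base p : Rpower 1 p = 1.
Proof. unfold Rpower. rewrite ln_1, Rmult_0_r. apply exp_0. Qed.

Lemma psi_mid e b x : 0 < e -> e <= 1/4 -> e < x -> x <= 1 - e ->
  psi e b x = e + aa e * Rpower ((x-e)/aa e) b.
Proof.
  intros H0 H1 Hx1 Hx2. unfold psi, aa. destruct (Rle_dec x e); [lra|].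
  destruct (Rle_dec x (1-e)); [|lra]. f_equal.
  replace (x - e) with ((1-2*e) * ((x-e)/(1-2*e))) at 1 by (field; lra).
  rewrite <- Rpower_mult_distr. 2: lra. 2: apply Rdiv_lt_0_compat; lra.
  rewrite <- Rmult_assoc, <- Rpower_plus. replace (1 - b + b) with 1 by ring.
  rewrite Rpower_1; lra.
Qed.

Lemma stepL e b k x : 0 <= x <= e ->
  is_RInt (Kf e b k) 0 x (x^(S k)/INR (fact (S k))).
Proof.
  intros Hx. apply is_RInt_ext with (fun y => y^k / INR (fact k)).
  2: apply int_low.
  intros y Hy. rewrite Rmin_left, Rmax_right in Hy by lra.
  unfold Kf. destruct (Rle_dec y e); [reflexivity|lra].
Qed.

Lemma stepM e b k x : 0 < e -> e <= 1/4 -> 1 < b -> e < x -> x <= 1 - e ->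
  is_RInt (Kf e b k) 0 (psi e b x) (Mid e b (S k) x).
Proof.
  intros H0 H1 Hb Hx1 Hx2. rewrite psi_mid by auto.
  assert (Ha : 0 < aa e) by (unfold aa; lra).
  set (a := aa e) in *. set (u := (x-e)/a).
  assert (Hu : 0 < u <= 1).
  { unfold u; split. apply Rdiv_lt_0_compat; lra.
    unfold Rdiv. apply Rmult_le_reg_r with a; auto. rewrite Rmult_assoc, Rinv_l by lra.
    unfold a, aa in *; lra. }
  set (w := Rpower u b).
  assert (Hw : 0 < w <= 1).
  { split. apply Rpower_pos. unfold w. rewrite <- (Rpower_1_base b).
    apply Rle_Rpower_l; lra. }
  replace (Mid e b (S k) x) with (plus (e^(S k)/INR (fact (S k)))
     (sum_n (fun l => qt e b k e l * a / (1 + pp b l) * Rpower w (pp b l + 1)) k)).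
  apply (@is_RInt_Chasles R_NormedModule) with e.
  apply stepL; lra.
  apply is_RInt_ext with (fun y => sum_n (fun l => qt e b k e l * pv b l ((y-e)/a)) k).
  { intros y Hy. rewrite Rmin_left, Rmax_right in Hy.
    2,3: generalize (Rmult_lt_0_compat a w Ha (proj1 Hw)); lra.
    unfold Kf. destruct (Rle_dec y e); [lra|].
    destruct (Rle_dec y (1-e)). reflexivity.
    exfalso. assert (a * w <= a) by nra. unfold a, aa in *; lra. }
  apply (is_RInt_sum (fun l y => qt e b k e l * pv b l ((y-e)/a))
     (fun l => qt e b k e l * a / (1 + pp b l) * Rpower w (pp b l + 1))).
  intros l _. apply int_mid; auto. lra.
  unfold Mid. fold a. rewrite sum_shift. unfold plus; simpl. f_equal.
  - unfold qt, PP. simpl. set (t := e^k). assert (INR (fact k + k * fact k) <> 0) by (apply not_0_INR; generalize (fact_neq_0 k); lia). field; auto.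
  - apply sum_n_ext. intros l. unfold pv. fold u.
    unfold pw. destruct (Rle_dec u 0); [lra|].
    rewrite ppS. unfold w. rewrite Rpower_mult.
    unfold qt. rewrite PPS. simpl pow. replace (S k - S l)%nat with (k - l)%nat by lia.
    generalize (PP_pos b l Hb) (pp_ge0 b l Hb); intros.
    change (aa e) with a. set (t := a ^ l). set (t2 := e ^ (k-l)). set (t3 := Rpower u _).
    generalize (fact_neq_0 (k-l)); intro.
    match goal with |- ?x = ?y => change (@eq R x y) end. field; repeat split; try lra; apply not_0_INR; auto.
Qed.

Lemma psi_1e e b : 0 < e -> e <= 1/4 -> psi e b (1-e) = 1 - e.
Proof.
  intros H0 H1. rewrite psi_mid by lra. replace ((1-e-e)/aa e) with 1 by (unfold aa; field; lra).
  rewrite Rpower_1_base. unfold aa; ring.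
Qed.

Lemma stepU e b k x : 0 < e -> e <= 1/4 -> 1 < b -> 1 - e < x ->
  is_RInt (Kf e b k) 0 x (Q e b (S k) (x - 1 + 2*e)).
Proof.
  intros H0 H1 Hb Hx.
  set (c := 1 - 2*e).
  replace (Q e b (S k) (x - 1 + 2*e)) with (plus (Mid e b (S k) (1-e))
     (sum_n (fun l => qt e b (S k) (x-c) l - qt e b (S k) (1-e-c) l) k)).
  apply (@is_RInt_Chasles R_NormedModule) with (1-e).
  pose proof (stepM e b k (1-e) H0 H1 Hb ltac:(lra) ltac:(lra)) as HM; rewrite psi_1e in HM by auto; exact HM.
  apply is_RInt_ext with (fun y => sum_n (fun l => qt e b k (y - c) l) k).
  { intros y Hy. rewrite Rmin_left, Rmax_right in Hy by lra.
    unfold Kf. destruct (Rle_dec y e); [lra|].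
    destruct (Rle_dec y (1-e)). lra. unfold Q. apply sum_n_ext; intro l. unfold c. replace (y - (1 - 2*e)) with (y - 1 + 2*e) by ring. reflexivity. }
  apply (is_RInt_sum (fun l y => qt e b k (y - c) l)
     (fun l => qt e b (S k) (x-c) l - qt e b (S k) (1-e-c) l)).
  intros l Hl. apply int_up; auto.
  unfold Mid, Q. unfold plus; simpl.
  replace (x - 1 + 2*e) with (x - c) by (unfold c; ring).
  replace (1 - e - c) with e by (unfold c; ring).
  replace ((1 - e - e) / aa e) with 1 by (unfold aa; field; lra).
  rewrite !sum_n_Reals. rewrite minus_sum.
  change (sum_f_R0 (qt e b (S k) (x-c)) (S k)) with
    (sum_f_R0 (qt e b (S k) (x - c)) k + qt e b (S k) (x-c) (S k)).
  change (sum_f_R0 (fun l => qt e b (S k) e l * pv b l 1) (S k)) with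
    (sum_f_R0 (fun l => qt e b (S k) e l * pv b l 1) k + qt e b (S k) e (S k) * pv b (S k) 1).
  replace (sum_f_R0 (fun l => qt e b (S k) e l * pv b l 1) k) with
     (sum_f_R0 (qt e b (S k) e) k).
  replace (qt e b (S k) e (S k) * pv b (S k) 1) with (qt e b (S k) (x-c) (S k)).
  ring.
  unfold pv, pw. destruct (Rle_dec 1 0); [lra|]. rewrite Rpower_1_base.
  unfold qt. rewrite Nat.sub_diag. simpl. ring.
  apply sum_eq. intros i _. destruct i. simpl; ring.
  unfold pv, pw. destruct (Rle_dec 1 0); [lra|]. rewrite Rpower_1_base. ring.
Qed.

Lemma psi_range e b x : 0 < e -> e <= 1/4 -> 1 < b -> 0 <= x <= 1 -> 0 <= psi e b x <= 1.
Proof.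
  intros H0 H1 Hb Hx. destruct (Rle_dec x e).
  unfold psi. destruct (Rle_dec x e); lra.
  destruct (Rle_dec x (1-e)).
  - rewrite psi_mid by lra.
    assert (Ha : 0 < aa e) by (unfold aa; lra).
    set (u := (x - e)/aa e).
    assert (Hu : 0 < u <= 1).
    { unfold u; split. apply Rdiv_lt_0_compat; lra.
      unfold Rdiv. apply Rmult_le_reg_r with (aa e); auto. rewrite Rmult_assoc, Rinv_l by lra.
      unfold aa in *; lra. }
    assert (0 < Rpower u b <= 1).
    { split. apply Rpower_pos. rewrite <- (Rpower_1_base b). apply Rle_Rpower_l; lra. }
    unfold aa in *. nra.
  - unfold psi. destruct (Rle_dec x e); [lra|]. destruct (Rle_dec x (1-e)); lra.
Qed.

Lemma G_eq e b k : 0 < e -> e <= 1/4 -> 1 < b ->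
  forall x, 0 <= x <= 1 -> G e b k x = Kf e b k x.
Proof.
  intros H0 H1 Hb. induction k; intros x Hx.
  - simpl. unfold Kf. destruct (Rle_dec x e). simpl; field.
    destruct (Rle_dec x (1-e)).
    unfold Mid. rewrite sum_O. unfold qt, PP, pv; simpl. field.
    unfold Q. rewrite sum_O. unfold qt, PP; simpl. field.
  - simpl. generalize (psi_range e b x H0 H1 Hb Hx); intro Hp.
    rewrite (RInt_ext (G e b k) (Kf e b k)).
    2:{ intros y Hy. rewrite Rmin_left, Rmax_right in Hy by lra. apply IHk; lra. }
    unfold Kf at 2. destruct (Rle_dec x e).
    + apply is_RInt_unique. unfold psi; destruct (Rle_dec x e); [|lra]. apply stepL; lra.
    + destruct (Rle_dec x (1-e)).
      * apply is_RInt_unique. apply stepM; lra.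
      * apply is_RInt_unique. unfold psi; destruct (Rle_dec x e); [lra|].
        destruct (Rle_dec x (1-e)); [lra|]. apply stepU; lra.
Qed.

Lemma d_Q e b n : 0 < e -> e <= 1/4 -> 1 < b -> (1 <= n)%nat -> d e b n = Q e b n (2*e).
Proof.
  intros H0 H1 Hb Hn. unfold d.
  rewrite (RInt_ext (G e b (n-1)) (Kf e b (n-1))).
  2:{ intros y Hy. rewrite Rmin_left, Rmax_right in Hy by lra. apply G_eq; auto; lra. }
  apply is_RInt_unique. replace n with (S (n-1)) at 2 by lia.
  replace (2*e) with (1 - 1 + 2*e) by ring. apply stepU; lra.
Qed.

Lemma part1 e b n : 0 < e -> e <= 1/4 -> 1 < b -> (1 <= n)%nat -> d e b n = dformula e b n.
Proof.
  intros H0 H1 Hb Hn. rewrite d_Q by auto. unfold Q, dformula, sum_n.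
  rewrite sum_Sn_m by lia. rewrite sum_Sn_m by lia. unfold plus; simpl.
  unfold qt, PP, aa. rewrite Nat.sub_0_r. simpl. set (S0 := sum_n_m _ 2 n). set (t := (2*e)^n). set (t2 := (2*e)^(n-1)).
  field; split; apply not_0_INR, fact_neq_0.
Qed.

Lemma pow_exp b l : 0 < b -> b ^ l = exp (INR l * ln b).
Proof. intros Hb. rewrite <- Rpower_pow by auto. reflexivity. Qed.

Lemma eventually_big b r : 1 < b -> 0 < r ->
  exists L, (1 <= L)%nat /\ forall l, (L <= l)%nat -> INR (S l) * r <= b ^ l.
Proof.
  intros Hb Hr. set (c := ln b).
  assert (Hc : 0 < c) by (unfold c; rewrite <- ln_1; apply ln_increasing; lra).
  assert (Hx : 0 <= 8 * r / (c*c)) by (apply Rlt_le, Rdiv_lt_0_compat; nra).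
  destruct (nfloor_ex _ Hx) as [n [_ Hn]].
  exists (S n). split. lia. intros l Hl.
  assert (HL : 8 * r / (c*c) < INR l).
  { apply Rlt_le_trans with (INR n + 1); auto. rewrite <- S_INR. apply le_INR; auto. }
  assert (Hl1 : 1 <= INR l) by (apply (le_INR 1); lia).
  rewrite pow_exp by lra. fold c.
  replace (INR l * c) with (INR l * c / 2 + INR l * c / 2) by field.
  rewrite exp_plus.
  assert (He : INR l * c / 2 < exp (INR l * c / 2)).
  { generalize (exp_ineq1 (INR l * c / 2)); intro H. assert (0 < INR l * c / 2) by nra.
    specialize (H ltac:(lra)). lra. }
  assert (H8 : 8 * r < INR l * (c * c)).
  { apply (Rmult_lt_compat_r (c*c)) in HL; [|nra]. unfold Rdiv in HL.
    rewrite Rmult_assoc, Rinv_l in HL by nra. lra. }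
  rewrite S_INR.
  assert (0 < INR l * c / 2) by nra.
  apply Rle_trans with ((INR l * c / 2) * (INR l * c / 2)); [|nra].
  nra.
Qed.

Definition bl e b l := INR (fact l) * (aa e / (2*e)) ^ l / PP b l.

Lemma bl_nonneg e b l : 0 < e -> e <= 1/4 -> 1 < b -> 0 <= bl e b l.
Proof.
  intros H0 H1 Hb. unfold bl. apply Rmult_le_pos. apply Rmult_le_pos. apply pos_INR.
  apply pow_le. apply Rlt_le, Rdiv_lt_0_compat; unfold aa; lra.
  apply Rlt_le, Rinv_0_lt_compat, PP_pos; auto.
Qed.

Lemma bl_S e b l : 0 < e -> e <= 1/4 -> 1 < b ->
  bl e b (S l) = bl e b l * (INR (S l) * (aa e / (2*e)) / (1 + pp b l)).
Proof.
  intros H0 H1 Hb. unfold bl. rewrite PPS, fact_simpl, mult_INR. simpl pow.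
  generalize (PP_pos b l Hb) (pp_ge0 b l Hb); intros.
  set (t := (aa e / (2*e))^l). field. lra.
Qed.

Lemma geom_ge b l : 1 < b -> b ^ l <= 1 + pp b l.
Proof.
  intros Hb. unfold pp. replace (1 + (geomsum b l - 1)) with (geomsum b l) by ring.
  induction l. unfold geomsum; simpl; lra.
  rewrite geomS. simpl. nra.
Qed.

Lemma sum_ge_term (f : nat -> R) N i : (forall j, 0 <= f j) -> (i <= N)%nat -> f i <= sum_f_R0 f N.
Proof.
  intros Hf. induction N; intros Hi.
  - replace i with 0%nat by lia. simpl; lra.
  - simpl. destruct (Nat.eq_dec i (S N)). subst. generalize (cond_pos_sum f N Hf); lra.
    generalize (Hf (S N)); intro. assert (f i <= sum_f_R0 f N) by (apply IHN; lia). lra.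
Qed.

Lemma bl_bounded e b : 0 < e -> e <= 1/4 -> 1 < b -> exists B, forall l, bl e b l <= B.
Proof.
  intros H0 H1 Hb. set (r := aa e / (2*e)).
  assert (Hr : 0 < r) by (unfold r, aa; apply Rdiv_lt_0_compat; lra).
  destruct (eventually_big b r Hb Hr) as [L [HL1 HL]].
  exists (sum_f_R0 (bl e b) L). intros l.
  assert (Hnn : forall j, 0 <= bl e b j) by (intro; apply bl_nonneg; auto).
  destruct (Compare_dec.le_lt_dec l L).
  - apply sum_ge_term; auto.
  - apply Rle_trans with (bl e b L); [|apply sum_ge_term; auto].
    replace l with (L + (l - L))%nat by lia. generalize (l - L)%nat. intro j.
    induction j. rewrite Nat.add_0_r; lra.
    replace (L + S j)%nat with (S (L + j)) by lia. rewrite bl_S by auto. fold r.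
    assert (INR (S (L+j)) * r / (1 + pp b (L+j)) <= 1).
    { generalize (HL (L+j)%nat ltac:(lia)) (geom_ge b (L+j) Hb) (pp_ge0 b (L+j) Hb); intros.
      apply Rmult_le_reg_r with (1 + pp b (L+j)). lra. unfold Rdiv.
      rewrite Rmult_assoc, Rinv_l by lra. lra. }
    generalize (Hnn (L+j)%nat); intro. assert (0 <= INR (S (L+j)) * r / (1 + pp b (L+j))).
    { apply Rmult_le_pos. apply Rmult_le_pos; [apply pos_INR|lra].
      apply Rlt_le, Rinv_0_lt_compat. generalize (pp_ge0 b (L+j) Hb); lra. }
    nra.
Qed.

Lemma qt_bl e b n l : 0 < e -> e <= 1/4 -> 1 < b -> (l <= n)%nat ->
  qt e b n (2*e) l = (2*e)^n / INR (fact n) * Binomial.C n l * bl e b l.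
Proof.
  intros H0 H1 Hb Hl. unfold qt, bl, Binomial.C.
  replace ((2*e)^n) with ((2*e)^l * (2*e)^(n-l)) by (rewrite <- pow_add; f_equal; lia).
  replace ((aa e / (2*e))^l) with (aa e ^ l / (2*e)^l) by (unfold Rdiv; rewrite (Rpow_mult_distr (aa e)), pow_inv; reflexivity).
  generalize (PP_pos b l Hb) (fact_neq_0 n) (fact_neq_0 l) (fact_neq_0 (n-l)); intros.
  assert ((2*e)^l <> 0) by (apply pow_nonzero; lra).
  set (t1 := (2*e)^l). set (t2 := (2*e)^(n-l)). set (t3 := aa e ^ l).
  field. repeat split; try lra; try apply not_0_INR; auto.
Qed.

Lemma sumC n : sum_f_R0 (fun l => Binomial.C n l) n = 2^n.
Proof.
  replace 2 with (1+1) by ring. rewrite binomial. apply sum_eq. intros i _.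
  rewrite !pow1. ring.
Qed.

Lemma part2 e b : 0 < e -> e <= 1/4 -> 1 < b ->
  exists C : R, forall n : nat, (1 <= n)%nat ->
      d e b n < C * (4*e)^n / INR (Factorial.fact n).
Proof.
  intros H0 H1 Hb. destruct (bl_bounded e b H0 H1 Hb) as [B HB].
  assert (HB0 : 0 <= B) by (apply Rle_trans with (bl e b 0); [apply bl_nonneg|]; auto).
  exists (B + 1). intros n Hn. rewrite d_Q by auto. unfold Q. rewrite sum_n_Reals.
  assert (Hf : 0 < INR (fact n)) by (apply lt_0_INR, lt_O_fact).
  assert (Hp : 0 < (2*e)^n) by (apply pow_lt; lra).
  apply Rle_lt_trans with (sum_f_R0 (fun l => (2*e)^n / INR (fact n) * B * Binomial.C n l) n).
  - apply sum_Rle. intros l Hl. rewrite qt_bl by auto.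
    assert (0 <= Binomial.C n l).
    { unfold Binomial.C. apply Rle_trans with 0; [lra|].
      apply Rlt_le, Rdiv_lt_0_compat. apply lt_0_INR, lt_O_fact.
      apply Rmult_lt_0_compat; apply lt_0_INR, lt_O_fact. }
    assert (0 <= (2*e)^n / INR (fact n)) by (apply Rlt_le, Rdiv_lt_0_compat; auto).
    specialize (HB l). set (X := (2*e)^n / INR (fact n)) in *. replace (X * B * Binomial.C n l) with (X * Binomial.C n l * B) by ring. apply Rmult_le_compat_l; auto. apply Rmult_le_pos; auto.
  - replace (sum_f_R0 (fun l => (2*e)^n / INR (fact n) * B * Binomial.C n l) n) with ((2*e)^n / INR (fact n) * B * sum_f_R0 (fun l => Binomial.C n l) n) by (rewrite scal_sum; apply sum_eq; intros; ring). rewrite sumC.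
    replace (4*e) with ((2*e)*2) by ring. rewrite (Rpow_mult_distr (2*e) 2).
    assert (0 < 2^n) by (apply pow_lt; lra).
    assert (0 < (2*e)^n * 2^n / INR (fact n)) by (apply Rdiv_lt_0_compat; nra).
    replace ((B+1) * ((2*e)^n * 2^n) / INR (fact n)) with
      ((2*e)^n / INR (fact n) * B * 2^n + (2*e)^n * 2^n / INR (fact n)) by (field; lra).
    lra.
Qed.

Theorem lemma4p5 (eps beta : R) (Heps0 : 0 < eps) (Heps1 : eps <= 1/4) (Hbeta : 1 < beta) :
  (forall n : nat, (1 <= n)%nat -> d eps beta n = dformula eps beta n) /\
  (exists C : R, forall n : nat, (1 <= n)%nat ->
      d eps beta n < C * (4*eps)^n / INR (Factorial.fact n)).
Proof.
  split.
  - intros n Hn. apply part1; auto.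
  - apply part2; auto.
Qed.
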